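(* Let $\mathbf V$ be a monoid variety satisfying the identities $xtx\approx xtx^2\approx x^2tx$. If $\mathbf A^1\not\subseteq\mathbf V$, then $\mathbf V$ satisfies $xy^2tx\approx(xy)^2tx$.
   Context: $A=\langle a,b,c\mid a^2=a,\ b^2=b,\ ab=ca=0,\ ac=cb=c\rangle=\{a,b,c,ba,bc,0\}$, $A^1$ is $A$ with a new identity element adjoined, and $\mathbf A^1$ is the monoid variety generated by $A^1$. *)

(* Defs.v *)
From mathcomp Require Import all_boot.
Set Implicit Arguments. Unset Strict Implicit. Unset Printing Implicit Defensive.

Record monoid := Monoid {
  carrier :> Type;
  mop : carrier -> carrier -> carrier;
  munit : carrier;
  massoc : forall x y z, mop x (mop y z) = mop (mop x y) z;
  mid_l : forall x, mop munit x = x;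
  mid_r : forall x, mop x munit = x }.

Definition word := seq nat.
Definition identity := (word * word)%type.

Definition eval (M : monoid) (e : nat -> M) (w : word) : M :=
  foldr (fun x acc => mop (e x) acc) (munit M) w.

Definition satisfies (M : monoid) (i : identity) : Prop :=
  forall e : nat -> M, eval e i.1 = eval e i.2.

(** A monoid variety is the class of all monoids satisfying a set of
    identities [Sigma] (Birkhoff).  [in_variety Sigma M] : M belongs to it. *)
Definition in_variety (Sigma : identity -> Prop) (M : monoid) : Prop :=
  forall i, Sigma i -> satisfies M i.

Definition variety_satisfies (Sigma : identity -> Prop) (i : identity) : Prop :=
  forall M : monoid, in_variety Sigma M -> satisfies M i.

Definition in_generated_variety (M N : monoid) : Prop :=
  forall i, satisfies M i -> satisfies N i.

Definition gen_variety_subset (M : monoid) (Sigma : identity -> Prop) : Prop :=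
  forall N : monoid, in_generated_variety M N -> in_variety Sigma N.

(** The semigroup A = <a,b,c | a^2=a, b^2=b, ab=ca=0, ac=cb=c>
    = {a,b,c,ba,bc,0}, with an identity adjoined: A^1. *)
Inductive A1 := E1 | Ea | Eb | Ec | Eba | Ebc | E0.

Definition A1mul (x y : A1) : A1 :=
  match x, y with
  | E1, _ => y
  | _, E1 => x
  | E0, _ => E0
  | _, E0 => E0
  | Ea, Ea => Ea | Ea, Eb => E0 | Ea, Ec => Ec | Ea, Eba => E0 | Ea, Ebc => E0
  | Eb, Ea => Eba | Eb, Eb => Eb | Eb, Ec => Ebc | Eb, Eba => Eba | Eb, Ebc => Ebc
  | Ec, Ea => E0 | Ec, Eb => Ec | Ec, Ec => E0 | Ec, Eba => E0 | Ec, Ebc => E0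
  | Eba, Ea => Eba | Eba, Eb => E0 | Eba, Ec => Ebc | Eba, Eba => E0 | Eba, Ebc => E0
  | Ebc, Ea => E0 | Ebc, Eb => Ebc | Ebc, Ec => E0 | Ebc, Eba => E0 | Ebc, Ebc => E0
  end.

Lemma A1mul_assoc x y z : A1mul x (A1mul y z) = A1mul (A1mul x y) z.
Proof. by case: x; case: y; case: z. Qed.
Lemma A1mul1x x : A1mul E1 x = x. Proof. by []. Qed.
Lemma A1mulx1 x : A1mul x E1 = x. Proof. by case: x. Qed.

Definition A1_monoid : monoid := Monoid A1mul_assoc A1mul1x A1mulx1.

(* Main.v *)
Require Import Defs.
From mathcomp Require Import all_boot.
From Stdlib Require Import Classical.
Set Implicit Arguments. Unset Strict Implicit. Unset Printing Implicit Defensive.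

Local Notation "x ** y" := (mop x y) (at level 41, right associativity).

Inductive L3 := lp | lq | lr.

Definition l2A (l : L3) : A1 := match l with lp => Ea | lq => Eb | lr => Ec end.
Definition evA (w : seq L3) : A1 := foldr (fun l acc => A1mul (l2A l) acc) E1 w.
Definition l2M (M : monoid) (P Q R : M) (l : L3) : M :=
  match l with lp => P | lq => Q | lr => R end.
Definition evM (M : monoid) (P Q R : M) (w : seq L3) : M :=
  foldr (fun l acc => l2M P Q R l ** acc) (munit M) w.
Definition sigma (a : A1) : seq L3 :=
  match a with E1 => [::] | Ea => [:: lp] | Eb => [:: lq] | Ec => [:: lr]
  | Eba => [:: lq; lp] | Ebc => [:: lq; lr] | E0 => [:: lr; lr] end.
Definition rep (M : monoid) (P Q R : M) (s : A1) : M :=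
  match s with E1 => munit M | Ea => P | Eb => Q | Ec => R
  | Eba => Q ** P | Ebc => Q ** R | E0 => R end.
Definition isr (l : L3) : bool := if l is lr then true else false.
Definition isp (l : L3) : bool := if l is lp then true else false.

Lemma evA_cat s t : evA (s ++ t) = A1mul (evA s) (evA t).
Proof. elim: s => [|l s IH] //=. by rewrite IH A1mul_assoc. Qed.

Lemma evM_cat (M : monoid) (P Q R : M) s t :
  evM P Q R (s ++ t) = evM P Q R s ** evM P Q R t.
Proof. elim: s => [|l s IH] /=; first by rewrite mid_l. by rewrite IH massoc. Qed.

Lemma sim (M : monoid) (P Q R : M) :
  P ** P = P -> Q ** Q = Q -> P ** R = R -> R ** Q = R ->
  forall w, evA w <> E0 -> evM P Q R w = rep P Q R (evA w).
Proof.
move=> HP HQ HPR HRQ; elim=> [|l w IH] //= H.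
have H' : evA w <> E0 by move=> E; apply: H; rewrite E; case: l.
rewrite IH //; move: H; case: l; case: (evA w) => //= _;
  by rewrite ?mid_r ?massoc ?HP ?HQ ?HPR ?HRQ.
Qed.

Lemma ev_count (M : monoid) (R : M) w :
  evM (munit M) (munit M) R w = iter (count isr w) (mop R) (munit M).
Proof. elim: w => [|l w IH] //=; case: l => /=; by rewrite ?mid_l IH. Qed.

Lemma si x y : x <> y -> exists a b,
  (A1mul a (A1mul x b) = Ebc /\ A1mul a (A1mul y b) = E0) \/
  (A1mul a (A1mul x b) = E0 /\ A1mul a (A1mul y b) = Ebc).
Proof.
Ltac fin := solve [left; split; reflexivity | right; split; reflexivity].
Ltac inner := first [exists E1; fin | exists Ea; fin | exists Eb; fin | exists Ec; fin
  | exists Eba; fin | exists Ebc; fin | exists E0; fin].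
case: x; case: y => // _;
first [exists E1; inner | exists Ea; inner | exists Eb; inner | exists Ec; inner
  | exists Eba; inner | exists Ebc; inner | exists E0; inner].
Qed.

Definition helpers (M : monoid) :=
  (forall a t : M, a ** t ** a = a ** t ** a ** a) /\
  (forall a t : M, a ** t ** a = a ** a ** t ** a).
Definition target (M : monoid) :=
  forall X Y T : M, X ** Y ** Y ** T ** X = X ** Y ** X ** Y ** T ** X.

Ltac use E := let H := fresh in have H := E; rewrite -?massoc in H; rewrite H; clear H.

Lemma tailize (M : monoid) (a b s : M) : a = b -> a ** s = b ** s.
Proof. by move=> ->. Qed.

Lemma sq3 (M : monoid) (h : helpers M) (a : M) : a ** a = a ** a ** a.
Proof. have := h.1 a (munit M); by rewrite !mid_l. Qed.
Lemma sq3' (M : monoid) (h : helpers M) (a s : M) : a ** a ** s = a ** a ** a ** s.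
Proof. have := tailize s (sq3 h a); by rewrite -!massoc. Qed.

Lemma sqid (M : monoid) (h : helpers M) (a : M) : (a ** a) ** (a ** a) = a ** a.
Proof. by rewrite -massoc -!sq3. Qed.

Lemma h1' (M : monoid) (h : helpers M) (a t s : M) : a ** t ** a ** s = a ** t ** a ** a ** s.
Proof. have := tailize s (h.1 a t); by rewrite -!massoc. Qed.
Lemma h2' (M : monoid) (h : helpers M) (a t s : M) : a ** t ** a ** s = a ** a ** t ** a ** s.
Proof. have := tailize s (h.2 a t); by rewrite -!massoc. Qed.

Lemma tgt_triv (M : monoid) : (forall x : M, x = munit M) -> target M.
Proof. move=> H X Y T; by rewrite (H (X ** _)) (H (X ** Y ** X ** _)). Qed.

Lemma tgt_idem (M : monoid) : (forall x : M, x ** x = x) -> target M.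
Proof.
move=> H X Y T.
have -> : X ** Y ** Y ** T ** X = X ** ((Y ** Y) ** T ** X) by rewrite -massoc.
have -> : X ** Y ** X ** Y ** T ** X = ((X ** Y) ** (X ** Y)) ** T ** X by rewrite -!massoc.
by rewrite !H -massoc.
Qed.

Lemma tgt_K (M : monoid) (h : helpers M) :
  (forall x t : M, x ** t ** x = x ** x ** t) -> target M.
Proof.
move=> K X Y T.
have K' : forall x t s : M, x ** t ** x ** s = x ** x ** t ** s.
  move=> x t s; have := tailize s (K x t); by rewrite -!massoc.
have -> : X ** Y ** Y ** T ** X = X ** X ** Y ** Y ** T.
  by have := K X (Y ** Y ** T); rewrite -!massoc.
have -> : X ** Y ** X ** Y ** T ** X = X ** X ** Y ** X ** Y ** T.
  by have := K X (Y ** X ** Y ** T); rewrite -!massoc.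
rewrite (K' Y X T).
have := K' X (Y ** Y) T; rewrite -!massoc => ->.
by rewrite -sq3'.
Qed.

Lemma tgt_EF (M : monoid) (h : helpers M) :
  (forall X Y T : M, (X ** X) ** (Y ** Y) ** T ** (X ** X) =
     (X ** X) ** (Y ** Y) ** (X ** X) ** (Y ** Y) ** T ** (X ** X)) -> target M.
Proof.
move=> H X Y T.
have E1 : X ** Y ** Y ** T ** X = (X ** X) ** (Y ** Y) ** T ** (X ** X).
  rewrite -!massoc.
  have -> : X ** Y ** Y ** T ** X = X ** X ** Y ** Y ** T ** X.
    by have := h.2 X (Y ** Y ** T); rewrite -!massoc.
  by have := h.1 X (X ** Y ** Y ** T); rewrite -!massoc.
have E2 : X ** Y ** X ** Y ** T ** X =
   (X ** X) ** (Y ** Y) ** (X ** X) ** (Y ** Y) ** T ** (X ** X).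
  rewrite -!massoc.
  have -> : X ** Y ** X ** Y ** T ** X = X ** X ** Y ** X ** Y ** T ** X.
    by have := h.2 X (Y ** X ** Y ** T); rewrite -!massoc.
  rewrite (h2' h Y X (T ** X)).
  have := h1' h X (X ** Y ** Y) (Y ** T ** X); rewrite -!massoc => ->.
  have := h1' h Y (X ** X) (T ** X); rewrite -!massoc => ->.
  by have := h.1 X (X ** Y ** Y ** X ** X ** Y ** Y ** T); rewrite -!massoc.
rewrite E1 E2; exact: H.
Qed.

Definition step (s : nat) (l : L3) : nat := match s, l with
 | 0, lp => 1 | 0, _ => 0 | 1, lq => 2 | 1, _ => 1 | 2, lp => 3 | 2, _ => 2
 | 3, lq => 4 | 3, _ => 3 | _, lp => 3 | _, _ => 4 end.
Definition run (w : seq L3) := foldl step 0 w.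
Definition val (M : monoid) (E F : M) (s : nat) : M := match s with
 | 0 => E | 1 => E ** F | 2 => E ** F ** E | 3 => E ** F ** E ** F
 | _ => E ** F ** E ** F ** E end.

Lemma run_rcons w l : run (rcons w l) = step (run w) l.
Proof. by rewrite /run -cats1 foldl_cat. Qed.
Lemma evA_rcons w l : evA (rcons w l) = A1mul (evA w) (l2A l).
Proof. by rewrite -cats1 evA_cat /= A1mulx1. Qed.
Lemma evM_rcons (M : monoid) (P Q R : M) w l :
  evM P Q R (rcons w l) = evM P Q R w ** l2M P Q R l.
Proof. by rewrite -cats1 evM_cat /= mid_r. Qed.
Lemma count_rcons w l : count isr (rcons w l) = count isr w + isr l.
Proof. by rewrite -cats1 count_cat /= addn0. Qed.

Lemma run_val (M : monoid) (h : helpers M) (E F R : M) w :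
  E ** E = E -> F ** F = F -> count isr w = 0 ->
  E ** evM F E R w = val E F (run w).
Proof.
move=> HE HF.
have HE' : forall s, E ** E ** s = E ** s by move=> s; rewrite massoc HE.
have HF' : forall s, F ** F ** s = F ** s by move=> s; rewrite massoc HF.
have H3 : E ** F ** E ** F ** E ** F = E ** F ** E ** F.
  by have := sq3 h (E ** F); rewrite -!massoc => <-.
elim/last_ind: w => [|w l IH]; first by rewrite /= mid_r.
rewrite count_rcons evM_rcons run_rcons massoc.
case: l => /=; rewrite ?addn0 ?addn1 // => /IH ->;
case: (run w) => [|[|[|[|s]]]] /=; by rewrite -?massoc ?HE ?HF ?HE' ?HF' ?H3.
Qed.

Lemma run_evA w : count isr w = 0 ->
  (run w = 0 -> evA w = E1 \/ evA w = Eb) /\ (run w = 1 -> evA w = Ea \/ evA w = Eba).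
Proof.
elim/last_ind: w => [|w l IH]; first by split => // _; left.
rewrite count_rcons evA_rcons run_rcons.
case: l => /=; rewrite ?addn0 ?addn1 // => /IH [IH0 IH1];
move: IH0 IH1; case: (run w) => [|[|[|[|s]]]] /= IH0 IH1; split => // _;
first [case: (IH0 erefl) => -> /= | case: (IH1 erefl) => -> /=]; by auto.
Qed.

Lemma qonly_evA w : count isr w = 0 -> ~~ has isp w -> evA w = E1 \/ evA w = Eb.
Proof.
elim: w => [|l w IH] /=; first by left.
case: l => //= H1 H2; case: (IH H1 H2) => ->; by right.
Qed.

Lemma nz V1 V2 : count isr V1 = 0 -> run V1 <= 1 -> count isr V2 = 0 ->
  ~~ has isp V2 -> evA (V1 ++ lr :: V2) <> E0.
Proof.
move=> H1 Hr H2 H3; rewrite evA_cat.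
have -> : evA (lr :: V2) = Ec by rewrite /=; case: (qonly_evA H2 H3) => ->.
have [A0 A1'] := run_evA H1.
move: Hr; case E: (run V1) => [|[|]] // _.
  by case: (A0 E) => ->.
by case: (A1' E) => ->.
Qed.

Lemma evE (M : monoid) (E R : M) w : E ** E = E -> count isr w = 0 ->
  evM E (munit M) R w = if has isp w then E else munit M.
Proof.
move=> HE; elim: w => [|l w IH] //=.
case: l => //= /IH ->; rewrite ?mid_l //; by case: (has isp w); rewrite ?HE ?mid_r.
Qed.

Lemma evQ (M : monoid) (P E R : M) w R' : count isr w = 0 -> ~~ has isp w ->
  R' ** E = R' -> R' ** evM P E R w = R'.
Proof.
move=> H1 H2 HR; elim: w H1 H2 => [|l w IH] /=; first by rewrite mid_r.
case: l => //= H1 H2; by rewrite massoc HR IH.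
Qed.

Lemma split1 V : count isr V = 1 -> exists V1 V2,
  V = V1 ++ lr :: V2 /\ count isr V1 = 0 /\ count isr V2 = 0.
Proof.
elim: V => [|l V IH] //=; case: l => /=.
- rewrite add0n => /IH [V1 [V2 [-> [H1 H2]]]]; by exists (lp :: V1), V2.
- rewrite add0n => /IH [V1 [V2 [-> [H1 H2]]]]; by exists (lq :: V1), V2.
- move=> [H]; by exists [::], V.
Qed.

Lemma iter2 (M : monoid) (h : helpers M) n (x : M) :
  iter n.+2 (mop x) (munit M) = x ** x.
Proof.
elim: n => [|n IH]; first by rewrite /= mid_r.
by rewrite iterS IH -sq3.
Qed.

Lemma core0 (M : monoid) (h : helpers M) U V :
  (forall P Q R : M, evM P Q R U = evM P Q R V) -> evA U = Ebc -> evA V = E0 ->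
  target M.
Proof.
move=> Heq HU HV.
have HUn : evA U <> E0 by rewrite HU.
have HU1 : forall x : M, x = iter (count isr V) (mop x) (munit M).
  move=> x; rewrite -ev_count -Heq (sim (P := munit M) (Q := munit M) (R := x)) ?HU /=
    ?mid_l ?mid_r //.
case En: (count isr V) => [|[|n]].
- apply: tgt_triv => x; by rewrite {1}(HU1 x) En.
- have [V1 [V2 [EV [C1 C2]]]] := split1 En.
  rewrite EV in Heq HV.
  case Hp: (has isp V2).
  + apply: tgt_K => //.
    have G : forall x t : M, x ** x ** t = x ** x ** t ** x ** x.
      move=> x t.
      have := Heq (x ** x) (munit M) ((x ** x) ** t).
      rewrite (sim (P := x ** x) (Q := munit M) (R := (x ** x) ** t)) ?HU //=;
        rewrite ?mid_l ?mid_r ?sqid //; last by rewrite massoc sqid.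
      rewrite evM_cat /= (evE _ (sqid h x) C1) (evE _ (sqid h x) C2) Hp.
      case: (has isp V1); rewrite ?mid_l -!massoc // => ->.
      by rewrite -!sq3'.
    move=> x t; rewrite (h.2 x t).
    have := G x (t ** x); rewrite -!massoc => ->.
    rewrite -(sq3 h x). by rewrite -G.
  + apply: tgt_EF => // X Y T.
    suff: forall E F T : M, E ** E = E -> F ** F = F ->
      E ** F ** T ** E = E ** F ** E ** F ** T ** E by move=> /(_ _ _ T (sqid h X) (sqid h Y)).
    move=> E F {}T HE HF.
    have HE' : forall s, E ** E ** s = E ** s by move=> s; rewrite massoc HE.
    have HR : (F ** T ** E) ** E = F ** T ** E by rewrite -!massoc HE.
    have := Heq F E (F ** T ** E).
    rewrite (sim (P := F) (Q := E) (R := F ** T ** E)) ?HU //=; last by rewrite massoc HF.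
    rewrite evM_cat /= (evQ _ _ C2 (negbT Hp) HR) => Eq.
    have := congr1 (mop E) Eq.
    move=> Eq2; rewrite HE' in Eq2; rewrite Eq2 massoc (run_val h _ HE HF C1).
    have Hr : 1 < run V1.
      rewrite ltnNge; apply/negP => Hr; exact: (nz C1 Hr C2 (negbT Hp) HV).
    have HF' : forall s, F ** F ** s = F ** s by move=> s; rewrite massoc HF.
    have H3 : forall s, E ** F ** E ** F ** E ** F ** s = E ** F ** E ** F ** s.
      move=> s; have := tailize s (sq3 h (E ** F)); by rewrite -!massoc => <-.
    move: Hr; case: (run V1) => [|[|[|[|s]]]] //= _; by rewrite -!massoc ?HF' ?H3.
- apply: tgt_idem => x; by rewrite -(iter2 h n x) -En -HU1.
Qed.

Lemma core (M : monoid) (h : helpers M) U V :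
  (forall P Q R : M, evM P Q R U = evM P Q R V) -> evA U <> evA V -> target M.
Proof.
move=> Heq Hne; have [a [b Hab]] := si Hne.
have Heq' : forall P Q R : M, evM P Q R (sigma a ++ U ++ sigma b) =
   evM P Q R (sigma a ++ V ++ sigma b) by move=> P Q R; rewrite !evM_cat Heq.
have evs : forall s, evA (sigma s) = s by case.
case: Hab => [[H1 H2]|[H1 H2]].
- apply: (core0 h Heq'); by rewrite !evA_cat !evs.
- apply: (core0 h (fun P Q R => esym (Heq' P Q R))); by rewrite !evA_cat !evs.
Qed.

(* letters: x = 0, y = 1, t = 2 *)
Theorem lemma4p5 (Sigma : identity -> Prop) :
  variety_satisfies Sigma ([:: 0; 2; 0], [:: 0; 2; 0; 0]) ->
  variety_satisfies Sigma ([:: 0; 2; 0], [:: 0; 0; 2; 0]) ->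
  ~ gen_variety_subset A1_monoid Sigma ->
  variety_satisfies Sigma ([:: 0; 1; 1; 2; 0], [:: 0; 1; 0; 1; 2; 0]).
Proof.
move=> Hs1 Hs2 Hn M HM.
have h : helpers M.
  split => a t.
  - have := Hs1 M HM (fun n => if n is 0 then a else t); by rewrite /= !mid_r.
  - have := Hs2 M HM (fun n => if n is 0 then a else t); by rewrite /= !mid_r.
have [[u v] [Hi Hf]] : exists i, Sigma i /\ ~ satisfies A1_monoid i.
  apply: NNPP => nex; apply: Hn => N HN i Hi; apply: HN.
  apply: NNPP => hf; apply: nex; by exists i.
have [e0 He0] : exists e0 : nat -> A1_monoid, eval e0 (u, v).1 <> eval e0 (u, v).2.
  apply: NNPP => H; apply: Hf => e; apply: NNPP => hne; apply: H; by exists e.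
have Hsat := HM _ Hi.
pose flat w := flatten (map (fun n => sigma (e0 n)) w).
have tA : forall w, evA (flat w) = eval e0 w.
  elim => //= n w IH; rewrite evA_cat IH; by case: (e0 n).
have tM : forall (P Q R : M) w,
    evM P Q R (flat w) = eval (fun n => evM P Q R (sigma (e0 n))) w.
  move=> P Q R; elim => //= n w IH; by rewrite evM_cat IH.
have Heq : forall P Q R : M, evM P Q R (flat u) = evM P Q R (flat v).
  move=> P Q R; rewrite !tM; exact: (Hsat (fun n => evM P Q R (sigma (e0 n)))).
have Hne : evA (flat u) <> evA (flat v) by rewrite !tA.
have T := core h Heq Hne.
move=> e /=; rewrite !mid_r; exact: T.
Qed.
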